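(* Let $(\mathcal U,\mathcal F)$ be a strongly accessible set system, $S$ a nonempty maximal solution with canonical order $s_1,\dots,s_{|S|}$, and $1\le j\le |S|$. Then $T=\mathrm{complete}(S[j])$ is a maximal solution and $T\preceq S$.
   Context: A set system is a pair $(\mathcal U,\mathcal F)$ with $\mathcal U$ finite, $\mathcal F\subseteq 2^{\mathcal U}$, $\emptyset\in\mathcal F$; $S\in\mathcal F$ is maximal if there is no $Y\in\mathcal F$ with $S\subsetneq Y$. Strongly accessible: for all $X,Y\in\mathcal F$ with $X\subsetneq Y$ there is $z\in Y\setminus X$ with $X\cup\{z\}\in\mathcal F$. Elements of $\mathcal U$ are identified with distinct integers. For $X,A\subseteq\mathcal U$, $X^+_A=\{a\in A\setminus X: X\cup\{a\}\in\mathcal F\}$. $Z=\{x\in\mathcal U:\{x\}\in\mathcal F\}$, $\mathrm{source}(X)=\min(X\cap Z)$. For $X\in\mathcal F$ and $A\subseteq\mathcal U$, $\mathrm{complete}(X,A)$ is obtained by repeatedly replacing $X$ with $X\cup\{\min X^+_A\}$ while $X^+_A\neq\emptyset$, and then returning $X$; $\mathrm{complete}(X)=\mathrm{complete}(X,\mathcal U)$. The canonical order of a nonempty maximal solution $S$ is $s_1=\mathrm{source}(S)$ and $s_{i+1}=\min S[i]^+_S$ while this set is nonempty, where $S[i]=\{s_1,\dots,s_i\}$ (equivalently, the order in which $\mathrm{complete}(\{\mathrm{source}(S)\},S)$ adds elements). For maximal solutions $S\ne T$ with canonical orders $(s_i)$, $(t_i)$, let $i$ be the smallest index with $s_i\neq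 t_i$; then $S\prec T$ iff $s_i<t_i$, and $S\preceq T$ iff $S\prec T$ or $S=T$. *)

(* Defs.v *)
From mathcomp Require Import all_boot.
Set Implicit Arguments. Unset Strict Implicit. Unset Printing Implicit Defensive.

(* The universe U is 'I_n: its elements are identified with the distinct
   integers 0..n-1, ordered by the usual order on nat. A set system is
   F : {set {set 'I_n}} with set0 \in F. *)

Section SetSystems.
Variable n : nat.
Implicit Types (F : {set {set 'I_n}}) (X Y S A : {set 'I_n}).

Definition maximal F S : bool :=
  (S \in F) && [forall Y in F, ~~ (S \proper Y)].

Definition strongly_accessible F : Prop :=
  forall X Y, X \in F -> Y \in F -> X \proper Y ->
    exists2 z, z \in Y :\: X & (z |: X) \in F.

Definition ext F X A : {set 'I_n} := [set a in A :\: X | (a |: X) \in F].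

Definition Zset F : {set 'I_n} := [set x | [set x] \in F].

Definition minpick (A : {set 'I_n}) : option 'I_n :=
  [pick a in A | [forall b in A, (a <= b)%N]].

Definition complete_step F A X : {set 'I_n} :=
  if minpick (ext F X A) is Some a then a |: X else X.

(* complete(X,A): the step is iterated; each effective step adds a new
   element, so after n iterations X^+_A is empty and the process stopped. *)
Definition complete F X A : {set 'I_n} := iter n (complete_step F A) X.

Fixpoint trace F A X (k : nat) : seq 'I_n :=
  if k is k'.+1 then
    if minpick (ext F X A) is Some a then a :: trace F A (a |: X) k' else [::]
  else [::].

(* canonical order: s_1 = source(S) = min(S ∩ Z), then s_{i+1} = min S[i]^+_S *)
Definition canon F S : seq 'I_n :=
  if minpick (S :&: Zset F) is Some s then s :: trace F S [set s] n else [::].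

Definition prefix_set F S (i : nat) : {set 'I_n} :=
  [set x in take i (canon F S)].

Definition prec F S T : Prop :=
  S != T /\
  exists i, [/\ (i < size (canon F S))%N, (i < size (canon F T))%N,
     take i (canon F S) = take i (canon F T) &
     (nth 0 (map val (canon F S)) i < nth 0 (map val (canon F T)) i)%N].

Definition preceq F S T : Prop := prec F S T \/ S = T.
End SetSystems.

(* Main.v *)
Require Import Defs.
From mathcomp Require Import all_boot.
Set Implicit Arguments. Unset Strict Implicit. Unset Printing Implicit Defensive.

Section Aux.
Variable n : nat.
Variable F : {set {set 'I_n}}.
Hypothesis SA : strongly_accessible F.

Lemma minpick_some (A : {set 'I_n}) a : minpick A = Some a ->
  a \in A /\ forall b, b \in A -> (a <= b)%N.
Proof.
rewrite /minpick; case: pickP => [x /andP[xA /forallP H] [<-]|//].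
split=> // b bA; exact: (implyP (H b)).
Qed.

Lemma minpick_mem (A : {set 'I_n}) b : b \in A ->
  exists2 a, minpick A = Some a & (a <= b)%N.
Proof.
move=> bA; rewrite /minpick; case: pickP => [x /andP[xA /forallP H]|H].
  by exists x => //; exact: (implyP (H b)).
case: (arg_minnP (fun i : 'I_n => nat_of_ord i) bA) => m mA mmin.
have : [forall b0 in A, (m <= b0)%N].
  by apply/forallP=> c; apply/implyP=> cA; exact: mmin.
move=> hf; have mA2 : m \in A := mA; by move: (H m); rewrite /= mA2 hf.
Qed.

Lemma in_ext X A a : (a \in ext F X A) = [&& a \in A, a \notin X & (a |: X) \in F].
Proof. by rewrite /ext !inE; case: (a \in A); case: (a \in X). Qed.

Definition lexle (c d : seq 'I_n) : Prop :=
  (exists i, [/\ (i < size c)%N, (i < size d)%N, take i c = take i d &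
     (nth 0 (map val c) i < nth 0 (map val d) i)%N]) \/
  (exists r, c = d ++ r) \/ (exists r, d = c ++ r).

Lemma lexle_cons a c d : lexle c d -> lexle (a :: c) (a :: d).
Proof.
case=> [[i [h1 h2 h3 h4]]|[[r ->]|[r ->]]].
- by left; exists i.+1; split => //=; rewrite h3.
- by right; left; exists r.
- by right; right; exists r.
Qed.

Lemma lexle_lt (a b : 'I_n) c d : (a < b)%N -> lexle (a :: c) (b :: d).
Proof. by move=> ab; left; exists 0%N; split. Qed.

Lemma lexle_nil_r c : lexle c [::].
Proof. by right; left; exists c. Qed.

Lemma lexle_nil_l c : lexle [::] c.
Proof. by right; right; exists c. Qed.

Definition step := complete_step F setT.

Lemma trace_sub A X k : [set x in trace F A X k] \subset A.
Proof.
elim: k X => [|k IH] X /=; first by apply/subsetP=> x; rewrite inE.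
case e: minpick => [a|]; last by apply/subsetP=> x; rewrite inE.
have [aE _] := minpick_some e; rewrite in_ext in aE; case/and3P: aE => aA _ _.
apply/subsetP=> x; rewrite inE in_cons; case/orP=> [/eqP -> //|xt].
by apply: (subsetP (IH (a |: X))); rewrite inE.
Qed.

Lemma trace_F A X k m : X \in F -> X :|: [set x in take m (trace F A X k)] \in F.
Proof.
elim: k X m => [|k IH] X m XF /=.
  by have -> : X :|: [set x in take m [::]] = X by apply/setP=> x; rewrite !inE orbF.
case e: minpick => [a|]; last first.
  by have -> : X :|: [set x in take m [::]] = X by apply/setP=> x; rewrite !inE orbF.
have [aE _] := minpick_some e; rewrite in_ext in aE; case/and3P: aE => aA _ aXF.
case: m => [|m].
  by have -> : X :|: [set x in take 0 (a :: trace F A (a |: X) k)] = X by apply/setP=> x; rewrite !inE orbF.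
have -> : X :|: [set x in take m.+1 (a :: trace F A (a |: X) k)] =
   (a |: X) :|: [set x in take m (trace F A (a |: X) k)].
  by apply/setP=> x; rewrite /= !inE; case: (x == a); case: (x \in X).
exact: IH.
Qed.

Lemma trace_cover A X k : A \in F -> X \in F -> X \subset A -> (#|A :\: X| <= k)%N ->
  A \subset X :|: [set x in trace F A X k].
Proof.
move=> AF; elim: k X => [|k IH] X XF XA.
  rewrite leqn0 cards_eq0 setD_eq0 => AX.
  by apply: subset_trans AX _; apply: subsetUl.
rewrite /=; case e: minpick => [a|]; last first.
  move=> _; case: (boolP (A \subset X)) => [AX|nAX].
    by apply: subset_trans AX _; apply: subsetUl.
  have XpA : X \proper A.
    rewrite properEneq XA andbT; apply: contraNneq nAX => ->; exact: subxx.
  have [z zD zF] := SA XF AF XpA.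
  have zE : z \in ext F X A by rewrite in_ext zF andbT andbC -in_setD zD.
  by have [a' ea' _] := minpick_mem zE; rewrite e in ea'.
have [aE _] := minpick_some e; rewrite in_ext in aE; case/and3P: aE => aA aX aXF.
move=> hc.
have hD : A :\: (a |: X) = (A :\: X) :\ a.
  by apply/setP=> x; rewrite !inE; case: (x == a); case: (x \in X).
have aD : a \in A :\: X by rewrite inE aX aA.
have hc' : (#|A :\: (a |: X)| <= k)%N.
  by move: hc; rewrite (cardsD1 a (A :\: X)) aD hD.
have := IH (a |: X) aXF.
have aXA : a |: X \subset A by rewrite subUset sub1set aA XA.
move=> /(_ aXA hc') sub.
apply: subset_trans sub _; apply/subsetP=> x; rewrite !inE /=.
by case: (x == a); case: (x \in X).
Qed.

Lemma step_F (Y : {set 'I_n})  : Y \in F -> step Y \in F.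
Proof.
rewrite /step /complete_step; case e: minpick => [a|] //.
by have [aE _] := minpick_some e; rewrite in_ext in aE; case/and3P: aE.
Qed.

Lemma step_sub (Y : {set 'I_n})  : Y \subset step Y.
Proof.
rewrite /step /complete_step; case: minpick => [a|]; last exact: subxx.
exact: subsetUr.
Qed.

Lemma iter_F (Y : {set 'I_n}) p : Y \in F -> iter p step Y \in F.
Proof. by move=> YF; elim: p => //= p IH; exact: step_F. Qed.

Lemma iter_sub (Y : {set 'I_n}) p : Y \subset iter p step Y.
Proof.
elim: p => [|p IH] /=; first exact: subxx.
exact: subset_trans IH (step_sub _).
Qed.

Lemma iter_count (X : {set 'I_n}) p : (p <= #|iter p step X|)%N \/ minpick (ext F (iter p step X) setT) = None.
Proof.
elim: p => [|p IH]; first by left.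
rewrite iterS {1 3}/step /complete_step.
case e: minpick => [a|]; last by right; rewrite e.
case: IH => [IH|]; last by rewrite e.
have [aE _] := minpick_some e; rewrite in_ext in aE; case/and3P: aE => _ aX _.
by left; rewrite cardsU1 aX.
Qed.

Lemma iter_fix (X : {set 'I_n})  : minpick (ext F (iter n step X) setT) = None.
Proof.
case: (iter_count X n) => // h.
have eT : iter n step X = setT.
  apply/eqP; rewrite eqEcard subsetT cardsT card_ord; exact: h.
case e: minpick => [a|] //.
have [aE _] := minpick_some e; rewrite in_ext eT in aE.
by case/and3P: aE; rewrite inE.
Qed.

Lemma iter_le_n (X : {set 'I_n}) p : iter p step X \subset iter n step X.
Proof.
case: (leqP p n) => h.
  have -> : iter n step X = iter (n - p) step (iter p step X) by rewrite -iterD subnK.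
  exact: iter_sub.
have fx : step (iter n step X) = iter n step X.
  by rewrite /step /complete_step iter_fix.
have -> : iter p step X = iter (p - n) step (iter n step X) by rewrite -iterD subnK // ltnW.
have -> : forall q, iter q step (iter n step X) = iter n step X.
  by elim=> //= q ->.
exact: subxx.
Qed.


Lemma trace_cmp (T S X0 : {set 'I_n}) :
  (forall p, iter p step X0 \subset T) ->
  forall k (Y : {set 'I_n}),
  ((exists m, Y :|: [set x in take m (trace F S Y k)] = X0) \/ exists p, Y = iter p step X0) ->
  lexle (trace F T Y k) (trace F S Y k).
Proof.
move=> HT; elim=> [|k IH] Y H; first by right; left; exists [::].
have ph2 : (exists p, Y = iter p step X0) -> lexle (trace F T Y k.+1) (trace F S Y k.+1).
  case=> p ->; rewrite /=.
  case eS: (minpick (ext F (iter p step X0) S)) => [b|]; last exact: lexle_nil_r.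
  have [bS _] := minpick_some eS.
  have bU : b \in ext F (iter p step X0) setT.
    by move: bS; rewrite !in_ext inE; case/and3P=> _ -> ->.
  have [u eU ub] := minpick_mem bU.
  have [uU umin] := minpick_some eU.
  have eX : iter p.+1 step X0 = u |: iter p step X0.
    by rewrite iterS {1}/step /complete_step eU.
  have uT : u \in T.
    by apply: (subsetP (HT p.+1)); rewrite eX setU11.
  have uext : u \in ext F (iter p step X0) T.
    by move: uU; rewrite !in_ext uT; case/and3P=> _ -> ->.
  have [a eA au] := minpick_mem uext.
  have [aT _] := minpick_some eA.
  have ua : (u <= a)%N.
    apply: umin; move: aT; rewrite !in_ext inE; by case/and3P=> _ -> ->.
  have eau : a = u by apply: val_inj; apply/eqP; rewrite eqn_leq au ua.
  rewrite eA eau.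
  case: (ltngtP u b) => [lt|gt|eq]; first exact: lexle_lt.
    by move: (leq_trans gt ub); rewrite ltnn.
  have -> : b = u by apply: val_inj.
  apply: lexle_cons; apply: IH; right; exists p.+1; by rewrite eX.
case: H => [[m HY]|]; last exact: ph2.
case: m HY => [|m] HY.
  apply: ph2; exists 0%N; rewrite /= -HY; apply/setP=> x; by rewrite !inE take0 orbF.
move: HY; rewrite /=.
case eS: (minpick (ext F Y S)) => [b|] HY; last exact: lexle_nil_r.
have [bS _] := minpick_some eS.
have bX0 : b \in X0 by rewrite -HY !inE /= eqxx orbT.
have bT : b \in T by apply: (subsetP (HT 0%N)).
have bext : b \in ext F Y T.
  by move: bS; rewrite !in_ext bT; case/and3P=> _ -> ->.
have [a eA ab] := minpick_mem bext.
rewrite eA.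
case: (ltngtP a b) => [lt|gt|eq]; first exact: lexle_lt.
  by move: (leq_trans gt ab); rewrite ltnn.
have -> : a = b by apply: val_inj.
apply: lexle_cons; apply: IH; left; exists m.
rewrite -HY; apply/setP=> x; rewrite !inE /=.
by case: (x == b); case: (x \in Y).
Qed.


Lemma canon_cover (A : {set 'I_n}) s : A \in F -> minpick (A :&: Zset F) = Some s ->
  A \subset [set x in canon F A] /\ [set x in canon F A] \subset A.
Proof.
move=> AF e; have [sAZ _] := minpick_some e.
rewrite inE in sAZ; case/andP: sAZ => sA; rewrite inE => sF.
rewrite /canon e; split.
  have := trace_cover AF sF (k := n).
  rewrite sub1set sA => /(_ isT).
  have hc : (#|A :\: [set s]| <= n)%N.
    by apply: leq_trans (max_card _) _; rewrite card_ord.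
  move=> /(_ hc) sub; apply: subset_trans sub _.
  by apply/subsetP=> x; rewrite !inE.
apply/subsetP=> x; rewrite !inE; case/orP=> [/eqP -> //|xt].
by apply: (subsetP (trace_sub A [set s] n)); rewrite inE.
Qed.

End Aux.

Theorem mainTheorem3 (n : nat) (F : {set {set 'I_n}}) (S : {set 'I_n}) (j : nat) :
  set0 \in F -> strongly_accessible F ->
  maximal F S -> S != set0 ->
  (1 <= j <= #|S|)%N ->
  maximal F (complete F (prefix_set F S j) setT) /\
  preceq F (complete F (prefix_set F S j) setT) S.
Proof.
move=> F0 SA maxS Sn0 /andP[j1 jS].
have SF : S \in F := (andP maxS).1.
have [z zD zF] := SA _ _ F0 SF (introT idP (etrans (proper0 S) Sn0)).
have zSZ : z \in S :&: Zset F.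
  by move: zD zF; rewrite !inE setU0 => /andP[_ ->] ->.
have [s0 e0 _] := minpick_mem zSZ.
have [s0SZ _] := minpick_some e0.
move: (s0SZ); rewrite inE => /andP[s0S]; rewrite inE => s0F.
case: j j1 jS => [//|j'] _ jS.
set X0 := prefix_set F S j'.+1.
have hX0 : X0 = [set s0] :|: [set x in take j' (trace F S [set s0] n)].
  by rewrite /X0 /prefix_set /canon e0; apply/setP=> x; rewrite !inE.
have X0F : X0 \in F by rewrite hX0; apply: trace_F.
set T := complete F X0 setT.
have eT : T = iter n (step F) X0 by [].
have TF : T \in F by rewrite eT; apply: iter_F.
have HT : forall p, iter p (step F) X0 \subset T by move=> p; rewrite eT; apply: iter_le_n.
have s0T : s0 \in T by apply: (subsetP (HT 0%N)); rewrite /= hX0 !inE eqxx.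
have maxT : maximal F T.
  rewrite /maximal TF /=; apply/forallP=> Y; apply/implyP=> YF; apply/negP=> TY.
  have [z' z'D z'F] := SA _ _ TF YF TY.
  have z'E : z' \in ext F T setT by rewrite in_ext z'F andbT inE; move: z'D; rewrite inE => /andP[->].
  have [a ea _] := minpick_mem z'E.
  by move: ea; rewrite eT iter_fix.
have tZ : s0 \in T :&: Zset F by rewrite inE s0T inE.
have [t0 et0 t0s0] := minpick_mem tZ.
have lx : lexle (canon F T) (canon F S).
  rewrite /canon e0 et0.
  case: (ltngtP t0 s0) => [lt|gt|eq]; first exact: lexle_lt.
    by move: (leq_trans gt t0s0); rewrite ltnn.
  have -> : t0 = s0 by apply: val_inj.
  apply: lexle_cons; apply: (trace_cmp HT); left; exists j'; by rewrite -hX0.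
split=> //.
case: (eqVneq T S) => [->|nTS]; first by right.
have [ST1 ST2] := canon_cover SA SF e0.
have [TT1 TT2] := canon_cover SA TF et0.
case: lx => [[i hi]|[[r hr]|[r hr]]].
- by left; split => //; exists i.
- have : S \subset T.
    apply: subset_trans ST1 _; apply: subset_trans _ TT2.
    by apply/subsetP=> x; rewrite !inE hr mem_cat => ->.
  move=> sST; have := (andP maxS).2; move/forallP/(_ T); rewrite TF /=.
  by rewrite properEneq sST andbT eq_sym nTS.
- have : T \subset S.
    apply: subset_trans TT1 _; apply: subset_trans _ ST2.
    by apply/subsetP=> x; rewrite !inE hr mem_cat => ->.
  move=> sTS; have := (andP maxT).2; move/forallP/(_ S); rewrite SF /=.
  by rewrite properEneq sTS andbT nTS.
Qed.
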